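(* Let $N, M, p, q, r, \hat r$ be nonnegative integers and consider the model $$Y = A Z^{\mathrm T} + X B^{\mathrm T} + U V^{\mathrm T} + E,$$ where $Y \in \mathbb{R}^{N\times M}$ is observed, $X \in \mathbb{R}^{N\times p}$ and $Z\in\mathbb{R}^{M\times q}$ are known matrices of full column rank, $A\in\mathbb{R}^{N\times q}$, $B\in\mathbb{R}^{M\times p}$, $U\in\mathbb{R}^{N\times r}$, $V\in\mathbb{R}^{M\times r}$ are unknown, $UV^{\mathrm T}$ has rank $r$, and the identifiability constraints $X^{\mathrm T}U = 0$ and $Z^{\mathrm T}V=0$ hold. Assume the rows of $E\in\mathbb{R}^{N\times M}$ are independent mean-zero multivariate normal random vectors with covariance matrix $\Sigma$. Let $s\in\mathbb{R}^M$ satisfy $Z^{\mathrm T}s = 0$ and put $\sigma^2(s) = s^{\mathrm T}\Sigma s$ (assumed positive). Let $H_X = X(X^{\mathrm T}X)^{-1}X^{\mathrm T}$, $H_Z = Z(Z^{\mathrm T}Z)^{-1}Z^{\mathrm T}$. The least squares fit with $\hat r$ estimated latent factors is obtained as follows: the regression residual is $\hat E_0 = (I-H_X)Y(I-H_Z)$, the estimated factor term $\hat U\hat V^{\mathrm T}$ is the rank-$\hat r$ truncated singular value decomposition of $\hat E_0$ (sum of its leading $\hat r$ singular terms), and the residual matrix is $\hat E = \hat E_0 - \hat U \hat V^{\mathrm T}$. Define $$\mathrm{df}_{\mathrm{resid}}(s) = \mathbb{E}\big(s^{\mathrm T}\hat E^{\mathrm T}\hat E s\big)/\sigma^2(s).$$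 Let $X = Q_1 R$ be the polar decomposition of $X$ ($Q_1\in\mathbb{R}^{N\times p}$ with orthonormal columns, $R\in\mathbb{R}^{p\times p}$ symmetric positive definite) and $Z = P_1 S$ the polar decomposition of $Z$. Choose $Q_2\in\mathbb{R}^{N\times(N-p)}$ and $P_2\in\mathbb{R}^{M\times (M-q)}$ such that $[Q_1\ Q_2]$ and $[P_1\ P_2]$ are orthogonal matrices. Set $n = N-p$, $m = M-q$, $Y_{22} = Q_2^{\mathrm T} Y P_2\in\mathbb{R}^{n\times m}$ and $s_2 = P_2^{\mathrm T}s$. Let $\hat U_2\hat V_2^{\mathrm T}$ be the rank-$\hat r$ truncated singular value decomposition of $Y_{22}$, let $\hat E_{22} = Y_{22} - \hat U_2 \hat V_2^{\mathrm T}$, and define $$\mathrm{df}^{(2)}_{\mathrm{resid}}(s_2) = \mathbb{E}\big(s_2^{\mathrm T}\hat E_{22}^{\mathrm T}\hat E_{22}s_2\big)/\sigma^2(s).$$ Then $\mathrm{df}_{\mathrm{resid}}(s) = \mathrm{df}^{(2)}_{\mathrm{resid}}(s_2)$.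
   Context: The reduced data $Y_{22}$ satisfy $Y_{22} = U_2V_2^{\mathrm T} + E_{22}$ with $U_2 = Q_2^{\mathrm T}U$, $V_2 = P_2^{\mathrm T}V$, $E_{22}=Q_2^{\mathrm T}EP_2$, whose rows are independent $N(0, P_2^{\mathrm T}\Sigma P_2)$ vectors; this is the covariate-free model.
   Formalization: The rank-r̂ truncated singular value decomposition of $\hat E_0$ is assumed almost surely unique, and $s^{\mathrm T}\hat E^{\mathrm T}\hat E s$ and $s_2^{\mathrm T}\hat E_{22}^{\mathrm T}\hat E_{22}s_2$ are assumed measurable. Apart from conventions, each condition added here is assumed in the paper as well or is needed for the statement above to hold. *)

(* Defs.v *)
From HB Require Import structures.
From mathcomp Require Import all_boot all_order all_algebra.
From mathcomp Require Import all_classical all_reals all_analysis.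
Set Implicit Arguments. Unset Strict Implicit. Unset Printing Implicit Defensive.
Import Order.TTheory GRing.Theory Num.Theory.
Local Open Scope classical_set_scope.
Local Open Scope ring_scope.

Section Defs.
Variable R : realType.

Definition is_svd (n m : nat) (A : 'M[R]_(n, m)) (Uf : 'M[R]_(n, minn n m))
  (d : 'rV[R]_(minn n m)) (Vf : 'M[R]_(m, minn n m)) : Prop :=
  [/\ Uf^T *m Uf = 1%:M, Vf^T *m Vf = 1%:M,
      (forall i, 0 <= d 0 i),
      (forall i j : 'I_(minn n m), (i <= j)%N -> d 0 j <= d 0 i) &
      A = Uf *m diag_mx d *m Vf^T].

Definition truncated_svd (n m : nat) (k : nat) (A : 'M[R]_(n, m))
  (T : 'M[R]_(n, m)) : Prop :=
  exists Uf d Vf, is_svd A Uf d Vf /\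
    T = \sum_(i < minn n m | (i < k)%N) d 0 i *: (col i Uf *m (col i Vf)^T).

Definition centered_normal_law (v : R) : set R -> \bar R :=
  if v == 0 then \d_(0 : R) else normal_prob 0 (Num.sqrt v).

Definition posdef (k : nat) (A : 'M[R]_k) : Prop :=
  A^T = A /\ forall v : 'cV[R]_k, v != 0 -> 0 < (v^T *m A *m v) 0 0.
Definition psd (k : nat) (A : 'M[R]_k) : Prop :=
  A^T = A /\ forall v : 'cV[R]_k, 0 <= (v^T *m A *m v) 0 0.

Definition hat_mx (N p : nat) (X : 'M[R]_(N, p)) : 'M[R]_N :=
  X *m invmx (X^T *m X) *m X^T.

Definition resid_quad (n m : nat) (E : 'M[R]_(n, m)) (s : 'cV[R]_m) : R :=
  (s^T *m E^T *m E *m s) 0 0.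

End Defs.

(* Main.v *)
Require Import Defs.
From HB Require Import structures.
From mathcomp Require Import all_boot all_order all_algebra.
From mathcomp Require Import all_classical all_reals all_analysis.
From mathcomp Require Import measurable_realfun.
Import Order.TTheory GRing.Theory Num.Theory.
Local Open Scope classical_set_scope.
Local Open Scope ring_scope.

Set Implicit Arguments. Unset Strict Implicit. Unset Printing Implicit Defensive.
Local Open Scope ring_scope.

Section LA.
Variable R : realType.

Definition orthof (n : nat) (f : nat -> 'cV[R]_n) (K : nat) : Prop :=
  forall a b, (a < K)%N -> (b < K)%N -> ((f a)^T *m f b) 0 0 = (a == b)%:R.

Lemma sumsq_gt0 n (v : 'cV[R]_n) : v != 0 -> 0 < (v^T *m v) 0 0.
Proof.
move=> vN0; rewrite mxE.
have [i vi] : exists i, v i 0 != 0.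
  apply/existsP; apply: contraR vN0 => /existsPn H.
  by apply/eqP/matrixP => a b; rewrite ord1 mxE; apply/eqP/negPn/H.
rewrite (bigD1 i) //= ltr_pwDl //.
  by rewrite mxE -expr2 lt_def sqr_ge0 sqrf_eq0 vi.
by apply: sumr_ge0 => j _; rewrite mxE -expr2 sqr_ge0.
Qed.

Lemma exists_orth_vec n K (f : nat -> 'cV[R]_n) : (K < n)%N ->
  exists v : 'cV[R]_n, (forall a, (a < K)%N -> ((f a)^T *m v) 0 0 = 0) /\
                       (v^T *m v) 0 0 = 1.
Proof.
move=> Kn.
pose W : 'M[R]_(n, K) := \matrix_(i, j) f j i 0.
have rk : (0 < \rank (kermx W))%N.
  by rewrite mxrank_ker subn_gt0 (leq_ltn_trans (rank_leq_col W)).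
have [i ui] : exists i, row i (kermx W) != 0.
  apply/existsP; apply: contraTT rk => /existsPn H.
  suff -> : kermx W = 0 by rewrite mxrank0.
  apply/row_matrixP => i; rewrite row0; exact/eqP/negPn/H.
set u := row i (kermx W) in ui.
have uW : u *m W = 0 by apply/sub_kermxP; exact: row_sub.
pose v := u^T.
have vN0 : v != 0 by apply: contra ui => /eqP/(congr1 trmx); rewrite trmxK trmx0 => ->.
have vpos := sumsq_gt0 vN0.
pose c := Num.sqrt ((v^T *m v) 0 0).
have cpos : 0 < c by rewrite sqrtr_gt0.
exists (c^-1 *: v); split.
  move=> a aK; rewrite -scalemxAr mxE.
  have := congr1 (fun M : 'M[R]_(1,K) => M 0 (Ordinal aK)) uW; rewrite !mxE => H.
  rewrite [X in _ * X](_ : _ = 0) ?mulr0 //.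
  rewrite -[RHS]H; apply: eq_bigr => j _; rewrite !mxE mulrC //.
have -> : (c^-1 *: v)^T = c^-1 *: v^T by apply/matrixP=> i' j'; rewrite !mxE.
rewrite -scalemxAl -scalemxAr scalerA mxE.
have cx : (v^T *m v) 0 0 = c ^+ 2 by rewrite sqr_sqrtr // ltW.
have c0 : c != 0 := lt0r_neq0 cpos.
by rewrite cx expr2 mulrA divfK // mulVf.
Qed.

Lemma dotC n (u w : 'cV[R]_n) : (u^T *m w) 0 0 = (w^T *m u) 0 0.
Proof. by rewrite !mxE; apply: eq_bigr => i _; rewrite !mxE mulrC. Qed.

Lemma orth_extend n K0 (f : nat -> 'cV[R]_n) K : (K0 <= K)%N -> (K <= n)%N ->
  orthof f K0 -> exists g, orthof g K /\ forall a, (a < K0)%N -> g a = f a.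
Proof.
elim: K => [|K IH] K0K Kn of_.
  by exists f.
case: (eqVneq K0 K.+1) => [E|NE].
  by subst; exists f.
have K0K' : (K0 <= K)%N by rewrite -ltnS ltn_neqAle NE.
have [g [og gf]] := IH K0K' (ltnW Kn) of_.
have [v [vo v1]] := exists_orth_vec g Kn.
exists (fun a => if a == K then v else g a); split; last first.
  move=> a aK0; have aK : (a == K) = false by rewrite ltn_eqF // (leq_trans aK0 K0K').
  by rewrite aK gf.
move=> a b; rewrite !ltnS => ha hb.
case: (eqVneq a K) => [Ea|aK]; case: (eqVneq b K) => [Eb|bK]; rewrite ?Ea ?Eb ?eqxx ?(negbTE aK) ?(negbTE bK).
- by rewrite v1.
- have hb' : (b < K)%N by rewrite ltn_neqAle bK.
  by rewrite dotC vo // eq_sym (negbTE bK).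
- have ha' : (a < K)%N by rewrite ltn_neqAle aK.
  by rewrite vo // (negbTE aK).
- have hb' : (b < K)%N by rewrite ltn_neqAle bK.
  have ha' : (a < K)%N by rewrite ltn_neqAle aK.
  by rewrite og.
Qed.

Definition extf (V : zmodType) k (v : 'I_k -> V) (j : nat) : V :=
  if insub j is Some o then v o else 0.

Lemma extf_val (V : zmodType) k (v : 'I_k -> V) (o : 'I_k) : extf v o = v o.
Proof. by rewrite /extf valK. Qed.

Lemma extfE (V : zmodType) k (v : 'I_k -> V) j (hj : (j < k)%N) :
  extf v j = v (Ordinal hj).
Proof. by rewrite -[j]/(val (Ordinal hj)) extf_val. Qed.

Lemma extfN (V : zmodType) k (v : 'I_k -> V) j : (k <= j)%N -> extf v j = 0.
Proof. by move=> h; rewrite /extf insubN // -leqNgt. Qed.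

Lemma coldot n k (U : 'M[R]_(n, k)) a b :
  ((col a U)^T *m col b U) 0 0 = (U^T *m U) a b.
Proof. by rewrite !mxE; apply: eq_bigr => i _; rewrite !mxE. Qed.

Lemma svd_sum n m k (Uf : 'M[R]_(n, k)) (d : 'rV[R]_k) (Vf : 'M[R]_(m, k)) :
  Uf *m diag_mx d *m Vf^T = \sum_j d 0 j *: (col j Uf *m (col j Vf)^T).
Proof.
apply/matrixP => i l; rewrite mxE summxE; apply: eq_bigr => j _.
rewrite !mxE big_ord1 !mxE (bigD1 j) //= !mxE eqxx mulr1n big1 ?addr0.
  by rewrite mulrA [d 0 j * _]mulrC.
by move=> j' nj; rewrite !mxE (negbTE nj) mulr0n mulr0 ?mul0r.
Qed.

Lemma trunc_embed n m N M k (Q : 'M[R]_(N, n)) (P : 'M[R]_(M, m)) (A T : 'M[R]_(n, m)) :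
  (n <= N)%N -> (m <= M)%N -> Q^T *m Q = 1%:M -> P^T *m P = 1%:M ->
  truncated_svd k A T -> truncated_svd k (Q *m A *m P^T) (Q *m T *m P^T).
Proof.
move=> nN mM QQ PP [Uf [d [Vf [[UU VV d0 dmon Adef] Tdef]]]].
set k2 := minn n m in Uf d Vf UU VV d0 dmon Adef Tdef *.
set K := minn N M.
have k2K : (k2 <= K)%N.
  by rewrite leq_min (leq_trans (geq_minl _ _) nN) (leq_trans (geq_minr _ _) mM).
pose fU := extf (fun o : 'I_k2 => Q *m col o Uf).
pose fV := extf (fun o : 'I_k2 => P *m col o Vf).
have oU : orthof fU k2.
  move=> a b ha hb; rewrite /fU !extfE trmx_mul -mulmxA (mulmxA Q^T) QQ mul1mx.
  by rewrite coldot UU mxE.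
have oV : orthof fV k2.
  move=> a b ha hb; rewrite /fV !extfE trmx_mul -mulmxA (mulmxA P^T) PP mul1mx.
  by rewrite coldot VV mxE.
have [g [og gf]] := orth_extend k2K (geq_minl N M) oU.
have [h [oh hf]] := orth_extend k2K (geq_minr N M) oV.
pose Uf' : 'M[R]_(N, K) := \matrix_(i, j) g j i 0.
pose Vf' : 'M[R]_(M, K) := \matrix_(i, j) h j i 0.
pose d' : 'rV[R]_K := \row_j extf (fun o : 'I_k2 => d 0 o) j.
have cU j : col j Uf' = g j by apply/matrixP => i l; rewrite !mxE ord1.
have cV j : col j Vf' = h j by apply/matrixP => i l; rewrite !mxE ord1.
pose H j := extf (fun o : 'I_k2 => d 0 o) j *: (fU j *m (fV j)^T).
have Hz j : (k2 <= j)%N -> H j = 0 by move=> hj; rewrite /H extfN ?scale0r.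
have Hd (j : 'I_K) : d' 0 j *: (col j Uf' *m (col j Vf')^T) = H j.
  rewrite cU cV mxE /H; case: (ltnP j k2) => hj; first by rewrite gf ?hf.
  by rewrite !extfN ?scale0r.
have conj (Pr : pred 'I_k2) : Q *m (\sum_(o | Pr o) d 0 o *: (col o Uf *m (col o Vf)^T)) *m P^T
    = \sum_(o | Pr o) H o.
  rewrite mulmx_sumr mulmx_suml; apply: eq_bigr => o _.
  rewrite /H /fU /fV !extf_val -scalemxAr -scalemxAl trmx_mul !mulmxA.
  by [].
have HK : \sum_(j < K) H j = \sum_(j < k2) H j.
  rewrite (big_ord_widen K H k2K) [RHS]big_mkcond /=; apply: eq_bigr => j _.
  by case: ltnP => // hj; rewrite Hz.
have HKk : \sum_(j < K | (j < k)%N) H j = \sum_(j < k2 | (j < k)%N) H j.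
  rewrite (big_ord_widen_cond K (fun j => (j < k)%N) H k2K) /=.
  rewrite [LHS]big_mkcond [RHS]big_mkcond /=; apply: eq_bigr => j _.
  by case: (j < k)%N => //=; case: ltnP => // hj; rewrite Hz.
exists Uf', d', Vf'; split; first (rewrite /is_svd; split).
- by apply/matrixP => a b; rewrite -coldot !cU og // mxE.
- by apply/matrixP => a b; rewrite -coldot !cV oh // mxE.
- move=> i; rewrite mxE; case: (ltnP i k2) => hi; last by rewrite extfN.
  by rewrite (extfE _ hi).
- move=> i j ij; rewrite !mxE; case: (ltnP j k2) => hj.
    have hi : (i < k2)%N by rewrite (leq_ltn_trans ij hj).
    by rewrite (extfE _ hi) (extfE _ hj); apply: dmon.
  rewrite (extfN _ hj); case: (ltnP i k2) => hi; last by rewrite extfN.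
  by rewrite (extfE _ hi).
- rewrite svd_sum (eq_bigr _ (fun j _ => Hd j)) HK Adef svd_sum.
  by rewrite (conj xpredT).
- rewrite (eq_bigr _ (fun j _ => Hd j)) HKk Tdef.
  by rewrite (conj (fun o => (o < k)%N)).
Qed.

Lemma invmxM' n (A B : 'M[R]_n) : A \in unitmx -> B \in unitmx ->
  invmx (A *m B) = invmx B *m invmx A.
Proof.
move=> uA uB; have uAB : A *m B \in unitmx by rewrite unitmx_mul uA uB.
have H : A *m B *m (invmx B *m invmx A) = 1%:M.
  by rewrite -mulmxA (mulmxA B) mulmxV // mul1mx mulmxV.
by rewrite -[LHS]mulmx1 -H mulKmx.
Qed.

Lemma posdef_unit n (A : 'M[R]_n) : posdef A -> A \in unitmx.
Proof.
move=> [_ H]; rewrite unitmxE unitfE; apply/negP => /det0P [v vN0 vA].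
have : v^T != 0 by rewrite trmx_eq0.
move/H; rewrite trmxK vA mul0mx mxE ltxx //.
Qed.

Lemma hat_polar N p (X Q : 'M[R]_(N, p)) (R1 : 'M[R]_p) :
  Q^T *m Q = 1%:M -> posdef R1 -> X = Q *m R1 -> hat_mx X = Q *m Q^T.
Proof.
move=> QQ pd ->; have u := posdef_unit pd.
have uT : R1^T \in unitmx by rewrite unitmx_tr.
rewrite /hat_mx trmx_mul -(mulmxA R1^T) (mulmxA Q^T) QQ mul1mx invmxM' //.
rewrite -!mulmxA (mulmxA R1) mulmxV // mul1mx (mulmxA (invmx R1^T)) mulVmx //.
by rewrite mul1mx.
Qed.

Lemma orth_split N p (Q1 : 'M[R]_(N, p)) (Q2 : 'M[R]_(N, N - p)) :
  (row_mx Q1 Q2)^T *m row_mx Q1 Q2 = 1%:M -> row_mx Q1 Q2 *m (row_mx Q1 Q2)^T = 1%:M ->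
  Q2^T *m Q2 = 1%:M /\ 1%:M - Q1 *m Q1^T = Q2 *m Q2^T.
Proof.
rewrite tr_row_mx mul_col_row mul_row_col (scalar_mx_block p (N - p)).
move=> /eq_block_mx [_ _ _ ->] H; split => //.
by rewrite -H addrC addKr.
Qed.
End LA.

Theorem theorem1 (R : realType) (dsp : measure_display) (Omega : measurableType dsp)
  (P : probability Omega R)
  (N M p q r rhat : nat)
  (X : 'M[R]_(N, p)) (Z : 'M[R]_(M, q))
  (A : 'M[R]_(N, q)) (B : 'M[R]_(M, p)) (U : 'M[R]_(N, r)) (V : 'M[R]_(M, r))
  (Sigma : 'M[R]_M) (E : Omega -> 'M[R]_(N, M)) (s : 'cV[R]_M)
  (Q1 : 'M[R]_(N, p)) (R1 : 'M[R]_p) (Q2 : 'M[R]_(N, N - p))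
  (P1 : 'M[R]_(M, q)) (S1 : 'M[R]_q) (P2 : 'M[R]_(M, M - q))
  (Ehat : Omega -> 'M[R]_(N, M)) (Ehat22 : Omega -> 'M[R]_(N - p, M - q)) :
  (* full column rank covariates *)
  \rank X = p -> \rank Z = q ->
  (* latent factor of rank r with identifiability constraints *)
  \rank (U *m V^T) = r -> X^T *m U = 0 -> Z^T *m V = 0 ->
  (* Sigma is a covariance matrix; rows of E independent N(0, Sigma):
     every linear functional sum_ij C_ij E_ij is centered normal with
     variance sum_i c_i^T Sigma c_i (c_i = i-th row of C) *)
  psd Sigma ->
  (forall C : 'M[R]_(N, M),
     measurable_fun setT (fun w => \sum_i \sum_j C i j * E w i j) /\
     forall Bs : set R, measurable Bs ->
       P ((fun w => \sum_i \sum_j C i j * E w i j) @^-1` Bs) =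
       centered_normal_law (\sum_i (row i C *m Sigma *m (row i C)^T) 0 0) Bs) ->
  (* the contrast s *)
  Z^T *m s = 0 -> 0 < (s^T *m Sigma *m s) 0 0 ->
  (* polar decompositions and orthogonal completions *)
  Q1^T *m Q1 = 1%:M -> posdef R1 -> X = Q1 *m R1 ->
  P1^T *m P1 = 1%:M -> posdef S1 -> Z = P1 *m S1 ->
  (row_mx Q1 Q2)^T *m row_mx Q1 Q2 = 1%:M -> row_mx Q1 Q2 *m (row_mx Q1 Q2)^T = 1%:M ->
  (row_mx P1 P2)^T *m row_mx P1 P2 = 1%:M -> row_mx P1 P2 *m (row_mx P1 P2)^T = 1%:M ->
  let Y := fun w => A *m Z^T + X *m B^T + U *m V^T + E w in
  let E0 := fun w => (1%:M - hat_mx X) *m Y w *m (1%:M - hat_mx Z) in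
  let Y22 := fun w => Q2^T *m Y w *m P2 in
  let s2 := P2^T *m s in
  let sigma2 := (s^T *m Sigma *m s) 0 0 in
  (* Ehat, Ehat22: residuals after removing a rank-rhat truncated SVD *)
  (forall w, exists T, truncated_svd rhat (E0 w) T /\ Ehat w = E0 w - T) ->
  (forall w, exists T, truncated_svd rhat (Y22 w) T /\ Ehat22 w = Y22 w - T) ->
  measurable_fun setT (fun w => resid_quad (Ehat w) s) ->
  measurable_fun setT (fun w => resid_quad (Ehat22 w) s2) ->
  (* the rank-rhat truncated SVD is almost surely well defined *)
  {ae P, forall w, forall T1 T2, truncated_svd rhat (E0 w) T1 ->
                   truncated_svd rhat (E0 w) T2 -> T1 = T2} ->
  ((\int[P]_w (resid_quad (Ehat w) s)%:E) * (sigma2^-1)%:E =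
   (\int[P]_w (resid_quad (Ehat22 w) s2)%:E) * (sigma2^-1)%:E)%E.
Proof.
move=> rkX rkZ rkUV XU ZV psdS HE Zs spos QQ1 R1pd XQ PP1 S1pd ZP QQ QQt PP PPt.
move=> Y E0 Y22 s2 sigma2 HEhat HEhat22 mEh mEh22 Hae.
have [Q22 Q2c] := orth_split QQ QQt.
have [P22 P2c] := orth_split PP PPt.
have hX := hat_polar QQ1 R1pd XQ.
have hZ := hat_polar PP1 S1pd ZP.
have E0E w : E0 w = Q2 *m Y22 w *m P2^T.
  by rewrite /E0 /Y22 hX hZ Q2c P2c !mulmxA.
congr (_ * _)%E.
apply: ae_eq_integral => //.
- by apply/measurable_EFinP.
- by apply/measurable_EFinP.
apply: filterS Hae => w Huniq _.
have [T22 [tT22 ->]] := HEhat22 w.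
have [T [tT ->]] := HEhat w.
have tT' := trunc_embed (leq_subr p N) (leq_subr q M) Q22 P22 tT22.
rewrite -E0E in tT'.
rewrite (Huniq _ _ tT tT') E0E -mulmxBl -mulmxBr.
congr (_)%:E; rewrite /resid_quad /s2.
rewrite !trmx_mul !trmxK !mulmxA -(mulmxA _ Q2^T Q2) Q22 mulmx1.
by [].
Qed.
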